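(* Let $V$ be a commutative unital quantale whose underlying lattice is a frame. The category $\mathsf{VGrp}$ is efficiently regular: it is regular and, whenever $R$ is an effective equivalence relation on an object $X$ and $T$ is another equivalence relation on $X$ such that there is a regular monomorphism $j\colon T\rightarrowtail R$ in $\mathsf{VGrp}$ (compatible with the projections to $X$), then $T$ is itself effective.
   Context: A commutative unital quantale $V$ is a complete lattice with a commutative associative operation $\otimes$ with unit $k$ preserving arbitrary joins in each variable; standing assumption: as a lattice $V$ is a frame. A $V$-category $(X,a)$: $a\colon X\times X\to V$ with $k\le a(x,x)$ and $a(x,x')\otimes a(x',x'')\le a(x,x'')$. A $V$-group $(X,a,+)$ is a $V$-category with a group structure (additive, not necessarily abelian) such that $a(x_1,x_2)\otimes a(x_1',x_2')\le a(x_1+x_1',x_2+x_2')$; $V$-homomorphisms are group homomorphisms $f$ with $a(x,x')\le b(f(x),f(x'))$; category $\mathsf{VGrp}$. An equivalence relation on $X$ (internal, given by a pair $t_1,t_2\colon T\to X$ jointly monic, reflexive, symmetric, transitive) is effective if it is the kernel pair of some morphism. A regular monomorphism is a morphism which is an equalizer of some pair of morphisms. *)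

(* Defs.v *)
Set Implicit Arguments.
Unset Strict Implicit.

Record quantale := Quantale {
  qcar :> Type;
  qle : qcar -> qcar -> Prop;
  qle_refl : forall x, qle x x;
  qle_trans : forall x y z, qle x y -> qle y z -> qle x z;
  qle_anti : forall x y, qle x y -> qle y x -> x = y;
  qsup : (qcar -> Prop) -> qcar;
  qsup_ub : forall (S : qcar -> Prop) x, S x -> qle x (qsup S);
  qsup_least : forall (S : qcar -> Prop) y, (forall x, S x -> qle x y) -> qle (qsup S) y;
  qten : qcar -> qcar -> qcar;
  qk : qcar;
  qten_assoc : forall x y z, qten x (qten y z) = qten (qten x y) z;
  qten_comm : forall x y, qten x y = qten y x;
  qten_kl : forall x, qten qk x = x;
  (* preserves arbitrary joins in each variable (by commutativity,
     the right variable suffices) *)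
  qten_sup : forall a (S : qcar -> Prop),
      qten a (qsup S) = qsup (fun y => exists x, S x /\ y = qten a x)
}.
Arguments qle {q}.
Arguments qsup {q}.
Arguments qten {q}.
Arguments qk {q}.

Definition qmeet (V : quantale) (a b : V) : V :=
  qsup (fun x => qle x a /\ qle x b).

Definition frame_law (V : quantale) : Prop :=
  forall (a : V) (S : V -> Prop),
    qmeet a (qsup S) = qsup (fun y => exists x, S x /\ y = qmeet a x).

Record vgrp (V : quantale) := VGrp {
  vcar :> Type;
  vdist : vcar -> vcar -> V;
  vzero : vcar;
  vadd : vcar -> vcar -> vcar;
  vopp : vcar -> vcar;
  vaddA : forall x y z, vadd x (vadd y z) = vadd (vadd x y) z;
  vadd0l : forall x, vadd vzero x = x;
  vadd0r : forall x, vadd x vzero = x;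
  vaddNl : forall x, vadd (vopp x) x = vzero;
  vaddNr : forall x, vadd x (vopp x) = vzero;
  vrefl : forall x, qle qk (vdist x x);
  vtrans : forall x y z, qle (qten (vdist x y) (vdist y z)) (vdist x z);
  vcompat : forall x1 x2 y1 y2,
      qle (qten (vdist x1 x2) (vdist y1 y2)) (vdist (vadd x1 y1) (vadd x2 y2))
}.
Arguments vdist {V v}.
Arguments vadd {V v}.

Record vhom (V : quantale) (X Y : vgrp V) := VHom {
  hfun :> X -> Y;
  hadd : forall x y, hfun (vadd x y) = vadd (hfun x) (hfun y);
  hcontr : forall x y, qle (vdist x y) (vdist (hfun x) (hfun y))
}.

Section Cat.
Variable V : quantale.
Notation obj := (vgrp V).

Definition hid (X : obj) : vhom X X.
Proof.
  refine (@VHom V X X (fun x => x) _ _).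
  - reflexivity.
  - intros; apply qle_refl.
Defined.

Definition hcomp (X Y Z : obj) (g : vhom Y Z) (f : vhom X Y) : vhom X Z.
Proof.
  refine (@VHom V X Z (fun x => g (f x)) _ _).
  - intros; rewrite (hadd f), (hadd g); reflexivity.
  - intros; eapply qle_trans; [apply (hcontr f) | apply (hcontr g)].
Defined.

Definition meq (X Y : obj) (f g : vhom X Y) : Prop := forall x, f x = g x.

Definition is_terminal (T : obj) : Prop :=
  forall X : obj, exists h : vhom X T, forall h' : vhom X T, meq h h'.

Definition is_pullback (X Y Z : obj) (f : vhom X Z) (g : vhom Y Z)
    (P : obj) (p1 : vhom P X) (p2 : vhom P Y) : Prop :=
  meq (hcomp f p1) (hcomp g p2) /\
  forall (Q : obj) (q1 : vhom Q X) (q2 : vhom Q Y),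
    meq (hcomp f q1) (hcomp g q2) ->
    exists h : vhom Q P,
      meq (hcomp p1 h) q1 /\ meq (hcomp p2 h) q2 /\
      forall h' : vhom Q P, meq (hcomp p1 h') q1 -> meq (hcomp p2 h') q2 -> meq h h'.

Definition is_kernel_pair (X Y : obj) (f : vhom X Y)
    (P : obj) (p1 p2 : vhom P X) : Prop := is_pullback f f p1 p2.

Definition is_coequalizer (A B C : obj) (u v : vhom A B) (q : vhom B C) : Prop :=
  meq (hcomp q u) (hcomp q v) /\
  forall (D : obj) (g : vhom B D), meq (hcomp g u) (hcomp g v) ->
    exists h : vhom C D, meq (hcomp h q) g /\
      forall h' : vhom C D, meq (hcomp h' q) g -> meq h h'.

Definition is_equalizer (E A B : obj) (u v : vhom A B) (e : vhom E A) : Prop :=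
  meq (hcomp u e) (hcomp v e) /\
  forall (D : obj) (g : vhom D A), meq (hcomp u g) (hcomp v g) ->
    exists h : vhom D E, meq (hcomp e h) g /\
      forall h' : vhom D E, meq (hcomp e h') g -> meq h h'.

Definition regular_epi (B C : obj) (q : vhom B C) : Prop :=
  exists (A : obj) (u v : vhom A B), is_coequalizer u v q.

Definition regular_mono (E A : obj) (e : vhom E A) : Prop :=
  exists (B : obj) (u v : vhom A B), is_equalizer u v e.

Definition is_regular_category : Prop :=
  (exists T : obj, is_terminal T) /\
  (forall (X Y Z : obj) (f : vhom X Z) (g : vhom Y Z),
      exists (P : obj) (p1 : vhom P X) (p2 : vhom P Y), is_pullback f g p1 p2) /\
  (forall (X Y : obj) (f : vhom X Y) (P : obj) (p1 p2 : vhom P X),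
      is_kernel_pair f p1 p2 ->
      exists (C : obj) (q : vhom X C), is_coequalizer p1 p2 q) /\
  (forall (X Y Z : obj) (f : vhom X Z) (g : vhom Y Z)
          (P : obj) (p1 : vhom P X) (p2 : vhom P Y),
      regular_epi f -> is_pullback f g p1 p2 -> regular_epi p2).

Definition jointly_monic (X T : obj) (t1 t2 : vhom T X) : Prop :=
  forall (Q : obj) (g h : vhom Q T),
    meq (hcomp t1 g) (hcomp t1 h) -> meq (hcomp t2 g) (hcomp t2 h) -> meq g h.

Definition reflexive_rel (X T : obj) (t1 t2 : vhom T X) : Prop :=
  exists r : vhom X T, meq (hcomp t1 r) (hid X) /\ meq (hcomp t2 r) (hid X).

Definition symmetric_rel (X T : obj) (t1 t2 : vhom T X) : Prop :=
  exists s : vhom T T, meq (hcomp t1 s) t2 /\ meq (hcomp t2 s) t1.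

Definition transitive_rel (X T : obj) (t1 t2 : vhom T X) : Prop :=
  forall (P : obj) (p1 p2 : vhom P T), is_pullback t2 t1 p1 p2 ->
    exists m : vhom P T, meq (hcomp t1 m) (hcomp t1 p1) /\ meq (hcomp t2 m) (hcomp t2 p2).

Definition is_equiv_rel (X T : obj) (t1 t2 : vhom T X) : Prop :=
  jointly_monic t1 t2 /\ reflexive_rel t1 t2 /\ symmetric_rel t1 t2 /\
  transitive_rel t1 t2.

Definition effective_rel (X T : obj) (t1 t2 : vhom T X) : Prop :=
  exists (Y : obj) (f : vhom X Y), is_kernel_pair f t1 t2.

End Cat.

(* Main.v *)
Require Import Defs.
From Stdlib Require Import ProofIrrelevance FunctionalExtensionality PropExtensionality ClassicalEpsilon.

Section S.
Variable V : quantale.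

Lemma qten_mono_r (a b c : V) : qle a b -> qle (qten c a) (qten c b).
Proof.
  intros H.
  assert (E : b = qsup (fun x => x = a \/ x = b)).
  { apply qle_anti. apply qsup_ub; auto.
    apply qsup_least. intros x [-> | ->]; auto using qle_refl. }
  rewrite E, qten_sup. apply qsup_ub. exists a; auto.
Qed.

Lemma qten_mono (a b c d : V) : qle a b -> qle c d -> qle (qten a c) (qten b d).
Proof.
  intros H1 H2. apply qle_trans with (qten a d). now apply qten_mono_r.
  rewrite (qten_comm a), (qten_comm b). now apply qten_mono_r.
Qed.

Lemma qten_kr (x : V) : qten x qk = x.
Proof. rewrite qten_comm; apply qten_kl. Qed.

Definition qtop : V := qsup (fun _ => True).
Lemma le_top (x : V) : qle x qtop.
Proof. apply qsup_ub; auto. Qed.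

Lemma qmeet_lb1 (a b : V) : qle (qmeet a b) a.
Proof. apply qsup_least; intros x [H _]; exact H. Qed.
Lemma qmeet_lb2 (a b : V) : qle (qmeet a b) b.
Proof. apply qsup_least; intros x [_ H]; exact H. Qed.
Lemma qmeet_glb (a b c : V) : qle c a -> qle c b -> qle c (qmeet a b).
Proof. intros; apply qsup_ub; auto. Qed.

Lemma qten_sup2_le (S1 S2 : V -> Prop) y :
  (forall a b, S1 a -> S2 b -> qle (qten a b) y) -> qle (qten (qsup S1) (qsup S2)) y.
Proof.
  intros H. rewrite qten_sup. apply qsup_least. intros z [b [Hb ->]].
  rewrite qten_comm, qten_sup. apply qsup_least. intros w [a [Ha ->]].
  rewrite qten_comm. auto.
Qed.

Lemma add_cancel_l (X : vgrp V) (a b c : X) : vadd a b = vadd a c -> b = c.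
Proof.
  intros H. apply (f_equal (vadd (vopp a))) in H.
  rewrite !vaddA, !vaddNl, !vadd0l in H. exact H.
Qed.
Lemma add_cancel_r (X : vgrp V) (a b c : X) : vadd a c = vadd b c -> a = b.
Proof.
  intros H. apply (f_equal (fun z => vadd z (vopp c))) in H.
  rewrite <- !vaddA, !vaddNr, !vadd0r in H. exact H.
Qed.
Lemma hom_zero (X Y : vgrp V) (f : vhom X Y) : f (vzero X) = vzero Y.
Proof.
  apply (add_cancel_l _ (f (vzero X))).
  rewrite <- hadd, !vadd0l, vadd0r. reflexivity.
Qed.
Lemma hom_opp (X Y : vgrp V) (f : vhom X Y) (x : X) : f (vopp x) = vopp (f x).
Proof.
  apply (add_cancel_r _ _ _ (f x)).
  rewrite <- hadd, !vaddNl. apply hom_zero.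
Qed.

Lemma sig_eq {A : Type} {P : A -> Prop} (a b : {x | P x}) :
  proj1_sig a = proj1_sig b -> a = b.
Proof. destruct a, b; simpl; intros ->. f_equal; apply proof_irrelevance. Qed.

Section Sub.
Variable X : vgrp V.
Variable P : X -> Prop.
Hypothesis H0 : P (vzero X).
Hypothesis Hadd : forall x y, P x -> P y -> P (vadd x y).
Hypothesis Hopp : forall x, P x -> P (vopp x).

Definition sadd (a b : {x | P x}) : {x | P x} :=
  exist P (vadd (proj1_sig a) (proj1_sig b)) (Hadd _ _ (proj2_sig a) (proj2_sig b)).
Definition sopp (a : {x | P x}) : {x | P x} :=
  exist P (vopp (proj1_sig a)) (Hopp _ (proj2_sig a)).
Definition szero : {x | P x} := exist P (vzero X) H0.

Definition subg (d : {x | P x} -> {x | P x} -> V)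
  (Hr : forall a, qle qk (d a a))
  (Ht : forall a b c, qle (qten (d a b) (d b c)) (d a c))
  (Hc : forall a1 a2 b1 b2, qle (qten (d a1 a2) (d b1 b2)) (d (sadd a1 b1) (sadd a2 b2))) : vgrp V.
Proof.
  refine (@VGrp V {x | P x} d szero sadd sopp _ _ _ _ _ Hr Ht Hc);
  intros; apply sig_eq; simpl.
  - apply vaddA.
  - apply vadd0l.
  - apply vadd0r.
  - apply vaddNl.
  - apply vaddNr.
Defined.

Definition subr : vgrp V.
Proof.
  refine (subg (fun a b => vdist (proj1_sig a) (proj1_sig b)) _ _ _); intros.
  - apply vrefl.
  - apply vtrans.
  - apply vcompat.
Defined.

Definition subr_incl : vhom subr X.
Proof.
  refine (@VHom V subr X (fun a => proj1_sig a) _ _); intros.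
  - reflexivity.
  - apply qle_refl.
Defined.
End Sub.
Arguments subr {X} P H0 Hadd Hopp. Arguments subr_incl {X} P H0 Hadd Hopp.

Definition prodg (X Y : vgrp V) : vgrp V.
Proof.
  refine (@VGrp V (X * Y)%type
    (fun p q => qmeet (vdist (fst p) (fst q)) (vdist (snd p) (snd q)))
    (vzero X, vzero Y)
    (fun p q => (vadd (fst p) (fst q), vadd (snd p) (snd q)))
    (fun p => (vopp (fst p), vopp (snd p))) _ _ _ _ _ _ _ _).
  - intros [] [] []; simpl; now rewrite !vaddA.
  - intros []; simpl; now rewrite !vadd0l.
  - intros []; simpl; now rewrite !vadd0r.
  - intros []; simpl; now rewrite !vaddNl.
  - intros []; simpl; now rewrite !vaddNr.
  - intros; apply qmeet_glb; apply vrefl.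
  - intros; apply qmeet_glb.
    + eapply qle_trans; [|apply vtrans]. apply qten_mono; apply qmeet_lb1.
    + eapply qle_trans; [|apply vtrans]. apply qten_mono; apply qmeet_lb2.
  - intros; apply qmeet_glb; simpl.
    + eapply qle_trans; [|apply vcompat]. apply qten_mono; apply qmeet_lb1.
    + eapply qle_trans; [|apply vcompat]. apply qten_mono; apply qmeet_lb2.
Defined.

Section PB.
Variables X Y Z : vgrp V.
Variable f : vhom X Z.
Variable g : vhom Y Z.
Definition Pb : vgrp V.
Proof.
  refine (@subr (prodg X Y) (fun p => f (fst p) = g (snd p)) _ _ _); simpl.
  - now rewrite !hom_zero.
  - intros [] [] H1 H2; simpl in *. now rewrite !hadd, H1, H2.
  - intros [] H; simpl in *. now rewrite !hom_opp, H.
Defined.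

Definition pb1 : vhom Pb X.
Proof.
  refine (@VHom V Pb X (fun a => fst (proj1_sig a)) _ _); intros.
  - reflexivity.
  - apply qmeet_lb1.
Defined.
Definition pb2 : vhom Pb Y.
Proof.
  refine (@VHom V Pb Y (fun a => snd (proj1_sig a)) _ _); intros.
  - reflexivity.
  - apply qmeet_lb2.
Defined.

Definition pb_lift (Q : vgrp V) (q1 : vhom Q X) (q2 : vhom Q Y)
  (H : meq (hcomp f q1) (hcomp g q2)) : vhom Q Pb.
Proof.
  refine (@VHom V Q Pb (fun w => exist _ (q1 w, q2 w) (H w)) _ _); intros.
  - apply sig_eq; simpl. now rewrite !hadd.
  - simpl. apply qmeet_glb; apply hcontr.
Defined.

Lemma pb_is_pullback : is_pullback f g pb1 pb2.
Proof.
  split.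
  - intros a. exact (proj2_sig a).
  - intros Q q1 q2 H. exists (pb_lift _ _ _ H). split; [|split].
    + intros w; reflexivity.
    + intros w; reflexivity.
    + intros h' H1 H2 w. apply sig_eq. simpl.
      specialize (H1 w); specialize (H2 w); simpl in *.
      rewrite <- H1, <- H2. symmetry; apply surjective_pairing.
Qed.
End PB.
Arguments Pb {X Y Z} f g. Arguments pb1 {X Y Z} f g. Arguments pb2 {X Y Z} f g.
Arguments pb_lift {X Y Z} f g {Q} q1 q2 H. Arguments pb_is_pullback {X Y Z} f g.


Section Im.
Variables X Y : vgrp V.
Variable f : vhom X Y.

Definition dim (c c' : {y : Y | exists x, f x = y}) : V :=
  qsup (fun a => exists x x', f x = proj1_sig c /\ f x' = proj1_sig c' /\ a = vdist x x').

Lemma im0 : exists x, f x = vzero Y.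
Proof. exists (vzero X). apply hom_zero. Qed.
Lemma imadd : forall y y', (exists x, f x = y) -> (exists x, f x = y') -> exists x, f x = vadd y y'.
Proof. intros y y' [x <-] [x' <-]. exists (vadd x x'). apply hadd. Qed.
Lemma imopp : forall y, (exists x, f x = y) -> exists x, f x = vopp y.
Proof. intros y [x <-]. exists (vopp x). apply hom_opp. Qed.

Definition Im : vgrp V.
Proof.
  refine (@subg Y (fun y => exists x, f x = y) im0 imadd imopp dim _ _ _).
  - intros [y [x e]]. unfold dim; simpl. eapply qle_trans; [apply (vrefl x)|].
    apply qsup_ub. exists x, x. auto.
  - intros a b c. unfold dim. apply qten_sup2_le.
    intros u w [x [x' [e1 [e2 ->]]]] [y [y' [e3 [e4 ->]]]].
    set (n := vadd (vopp x') y).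
    assert (Hn : f n = vzero Y).
    { unfold n. rewrite hadd, hom_opp, e2, <- e3. apply vaddNl. }
    assert (Hxn : vadd x' n = y).
    { unfold n. rewrite vaddA, vaddNr. apply vadd0l. }
    apply qle_trans with (qten (vdist (vadd x n) y) (vdist y y')).
    + apply qten_mono; [|apply qle_refl].
      rewrite <- Hxn. eapply qle_trans; [|apply vcompat].
      rewrite <- (qten_kr (vdist x x')) at 1. apply qten_mono_r. apply vrefl.
    + eapply qle_trans; [apply vtrans|]. apply qsup_ub.
      exists (vadd x n), y'. rewrite hadd, Hn, vadd0r. auto.
  - intros a1 a2 b1 b2. unfold dim. apply qten_sup2_le.
    intros u w [x [x' [e1 [e2 ->]]]] [y [y' [e3 [e4 ->]]]].
    eapply qle_trans; [apply vcompat|]. apply qsup_ub.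
    exists (vadd x y), (vadd x' y'). simpl. rewrite !hadd, e1, e2, e3, e4. auto.
Defined.

Definition cor : vhom X Im.
Proof.
  refine (@VHom V X Im (fun x => exist _ (f x) (ex_intro _ x eq_refl)) _ _); intros.
  - apply sig_eq; simpl. apply hadd.
  - simpl. unfold dim. apply qsup_ub. exists x, y. simpl. auto.
Defined.

Definition incl : vhom Im Y.
Proof.
  refine (@VHom V Im Y (fun c => proj1_sig c) _ _); intros.
  - reflexivity.
  - simpl. unfold dim. apply qsup_least. intros a [u [u' [e1 [e2 ->]]]].
    rewrite <- e1, <- e2. apply hcontr.
Defined.
End Im.
Arguments dim {X Y} f. Arguments Im {X Y} f. Arguments cor {X Y} f. Arguments incl {X Y} f.

Definition final {X Z : vgrp V} (f : vhom X Z) : Prop :=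
  forall z z', qle (vdist z z')
    (qsup (fun a => exists x x', f x = z /\ f x' = z' /\ a = vdist x x')).

Lemma coeq_of_final (A X Z : vgrp V) (u v : vhom A X) (f : vhom X Z)
  (Hs : forall z, exists x, f x = z) (Hf : final f)
  (Huv : forall a, f (u a) = f (v a))
  (Hcov : forall x x', f x = f x' -> exists a, u a = x /\ v a = x') :
  is_coequalizer u v f.
Proof.
  split; [exact Huv|]. intros D g Hg.
  assert (Hk : forall x x', f x = f x' -> g x = g x').
  { intros x x' e. destruct (Hcov x x' e) as [a [<- <-]]. apply Hg. }
  pose (s z := proj1_sig (constructive_indefinite_description _ (Hs z))).
  assert (Hsz : forall z, f (s z) = z).
  { intros z. unfold s. destruct (constructive_indefinite_description _ (Hs z)); auto. }
  assert (Ha : forall z z' : Z, g (s (vadd z z')) = vadd (g (s z)) (g (s z'))).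
  { intros z z'. rewrite <- hadd. apply Hk. rewrite !hadd, !Hsz. reflexivity. }
  assert (Hc : forall z z' : Z, qle (vdist z z') (vdist (g (s z)) (g (s z')))).
  { intros z z'. eapply qle_trans; [apply Hf|]. apply qsup_least.
    intros a [x [x' [e1 [e2 ->]]]].
    rewrite <- (Hk x (s z)), <- (Hk x' (s z')) by (rewrite Hsz; auto).
    apply hcontr. }
  exists (@VHom V Z D (fun z => g (s z)) Ha Hc).
  split.
    + intros x; simpl. apply Hk. rewrite Hsz; auto.
    + intros h' Hh z; simpl. rewrite <- (Hh (s z)); simpl. rewrite Hsz; reflexivity.
Qed.

Lemma regepi_props (X Z : vgrp V) (f : vhom X Z) :
  regular_epi f -> (forall z, exists x, f x = z) /\ final f.
Proof.
  intros [A [u [v [Hc Hu]]]].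
  destruct (Hu (Im f) (cor f)) as [h [Hh _]].
  { intros a. apply sig_eq. apply Hc. }
  destruct (Hu Z f Hc) as [h0 [_ Hun]].
  assert (E : forall z, proj1_sig (h z) = z).
  { intros z. pose proof (Hun (hcomp (incl f) h)) as E1. pose proof (Hun (hid Z)) as E2.
    assert (A1 : meq h0 (hcomp (incl f) h)).
    { apply E1. intros x. simpl. specialize (Hh x). simpl in Hh. rewrite Hh. reflexivity. }
    assert (A2 := E2 (fun x => eq_refl)).
    specialize (A1 z); specialize (A2 z); simpl in *. congruence. }
  split.
  - intros z. destruct (proj2_sig (h z)) as [x e]. exists x. rewrite e. apply E.
  - intros z z'. eapply qle_trans; [apply (hcontr h)|]. simpl. unfold dim.
    rewrite !E. apply qle_refl.
Qed.

Lemma pb_props (X Y Z : vgrp V) (f : vhom X Z) (g : vhom Y Z) (P : vgrp V)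
  (p1 : vhom P X) (p2 : vhom P Y) : is_pullback f g p1 p2 ->
  (forall x y, f x = g y -> exists p, p1 p = x /\ p2 p = y) /\
  (forall p p', p1 p = p1 p' -> p2 p = p2 p' -> p = p') /\
  (forall p p', qle (qmeet (vdist (p1 p) (p1 p')) (vdist (p2 p) (p2 p'))) (vdist p p')).
Proof.
  intros [Hc Hu].
  destruct (Hu (Pb f g) (pb1 f g) (pb2 f g) (proj1 (pb_is_pullback f g))) as [h [H1 [H2 _]]].
  pose (k := pb_lift f g p1 p2 Hc).
  assert (Hhk : forall p, h (k p) = p).
  { destruct (Hu P p1 p2 Hc) as [h0 [_ [_ Hun]]].
    intros p. assert (A2 := Hun (hid P) (fun _ => eq_refl) (fun _ => eq_refl) p).
    assert (A1 : meq h0 (hcomp h k)).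
    { apply Hun. - intros w; simpl. apply H1. - intros w; simpl. apply H2. }
    specialize (A1 p). simpl in *. congruence. }
  split; [|split].
  - intros x y e. exists (h (exist _ (x, y) e)). split; [apply H1 | apply H2].
  - intros p p' e1 e2. rewrite <- (Hhk p), <- (Hhk p'). f_equal. apply sig_eq. simpl.
    rewrite e1, e2; reflexivity.
  - intros p p'. pose proof (hcontr h (k p) (k p')) as E. rewrite !Hhk in E. exact E.
Qed.

Lemma regmono_props (E A : vgrp V) (e : vhom E A) : regular_mono e ->
  (forall a b, e a = e b -> a = b) /\ (forall a b, qle (vdist (e a) (e b)) (vdist a b)).
Proof.
  intros [B [u [v [Hc Hu]]]].
  assert (P0 : u (vzero A) = v (vzero A)) by (now rewrite !hom_zero).
  assert (Padd : forall x y, u x = v x -> u y = v y -> u (vadd x y) = v (vadd x y))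
    by (intros x y H1 H2; now rewrite !hadd, H1, H2).
  assert (Popp : forall x, u x = v x -> u (vopp x) = v (vopp x))
    by (intros x H; now rewrite !hom_opp, H).
  pose (Eq := subr (fun a => u a = v a) P0 Padd Popp).
  destruct (Hu Eq (subr_incl _ P0 Padd Popp)) as [h [Hh _]].
  { intros w. exact (proj2_sig w). }
  assert (Hk : forall a, u (e a) = v (e a)) by apply Hc.
  assert (Kd : {k : vhom E Eq | forall a, proj1_sig (k a) = e a}).
  { unshelve eexists (@VHom V E Eq (fun a => exist _ (e a) (Hk a)) _ _).
    - intros x y. apply sig_eq. simpl. apply hadd.
    - intros x y. simpl. apply hcontr.
    - intros a. reflexivity. }
  destruct Kd as [k Hkd].
  assert (Hhk : forall a, h (k a) = a).
  { destruct (Hu E e Hc) as [h0 [_ Hun]].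
    intros a. assert (A2 := Hun (hid E) (fun _ => eq_refl) a).
    assert (A1 : meq h0 (hcomp h k)).
    { apply Hun. intros w; simpl. pose proof (Hh (k w)) as HH. simpl in HH. rewrite HH. apply Hkd. }
    specialize (A1 a). simpl in *. congruence. }
  split.
  - intros a b H. rewrite <- (Hhk a), <- (Hhk b). f_equal. apply sig_eq. rewrite !Hkd. exact H.
  - intros a b. pose proof (hcontr h (k a) (k b)) as E1. rewrite !Hhk in E1. simpl in E1. rewrite !Hkd in E1. exact E1.
Qed.

Section Quot.
Variable X : vgrp V.
Variable rel : X -> X -> Prop.
Hypothesis Hrefl : forall x, rel x x.
Hypothesis Hsym : forall x y, rel x y -> rel y x.
Hypothesis Htrans : forall x y z, rel x y -> rel y z -> rel x z.
Hypothesis Hcong : forall x x' y y', rel x x' -> rel y y' -> rel (vadd x y) (vadd x' y').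

Definition rep (x : X) : X := epsilon (inhabits (vzero X)) (rel x).
Lemma rep_spec x : rel x (rep x).
Proof. unfold rep. apply epsilon_spec. exists x; auto. Qed.
Lemma rep_eq x y : rel x y -> rep x = rep y.
Proof.
  intros H. unfold rep. f_equal. apply functional_extensionality; intro z.
  apply propositional_extensionality; split; eauto.
Qed.
Lemma rep_rel x y : rep x = rep y -> rel x y.
Proof. intros H. pose proof (rep_spec x). pose proof (rep_spec y). rewrite H in *. eauto. Qed.
Lemma rep_idem x : rep (rep x) = rep x.
Proof. symmetry. apply rep_eq, rep_spec. Qed.
Lemma rep_addl x y : rep (vadd (rep x) y) = rep (vadd x y).
Proof. apply rep_eq. apply Hcong; [apply Hsym, rep_spec | apply Hrefl]. Qed.
Lemma rep_addr x y : rep (vadd x (rep y)) = rep (vadd x y).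
Proof. apply rep_eq. apply Hcong; [apply Hrefl | apply Hsym, rep_spec]. Qed.

Definition quot : vgrp V.
Proof.
  refine (@VGrp V {x : X | rep x = x} (fun _ _ => qtop)
    (exist _ (rep (vzero X)) (rep_idem _))
    (fun a b => exist _ (rep (vadd (proj1_sig a) (proj1_sig b))) (rep_idem _))
    (fun a => exist _ (rep (vopp (proj1_sig a))) (rep_idem _)) _ _ _ _ _ _ _ _).
  - intros [a Ha] [b Hb] [c Hc]; apply sig_eq; simpl.
    rewrite rep_addr, rep_addl, vaddA. reflexivity.
  - intros [a Ha]; apply sig_eq; simpl. rewrite rep_addl, vadd0l. exact Ha.
  - intros [a Ha]; apply sig_eq; simpl. rewrite rep_addr, vadd0r. exact Ha.
  - intros [a Ha]; apply sig_eq; simpl. rewrite rep_addl, vaddNl. reflexivity.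
  - intros [a Ha]; apply sig_eq; simpl. rewrite rep_addr, vaddNr. reflexivity.
  - intros; apply le_top.
  - intros; apply le_top.
  - intros; apply le_top.
Defined.

Definition qproj : vhom X quot.
Proof.
  refine (@VHom V X quot (fun x => exist _ (rep x) (rep_idem x)) _ _); intros.
  - apply sig_eq; simpl. rewrite rep_addl, rep_addr. reflexivity.
  - apply le_top.
Defined.

Lemma qproj_eq x y : qproj x = qproj y <-> rel x y.
Proof.
  split.
  - intros H. apply rep_rel. exact (f_equal (@proj1_sig _ _) H).
  - intros H. apply sig_eq. simpl. now apply rep_eq.
Qed.
End Quot.

Definition Term : vgrp V.
Proof.
  refine (@VGrp V unit (fun _ _ => qtop) tt (fun _ _ => tt) (fun _ => tt) _ _ _ _ _ _ _ _);
  intros; try apply le_top; repeat match goal with u : unit |- _ => destruct u end; reflexivity.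
Defined.


Arguments pb_props {X Y Z f g P p1 p2} _.
Arguments regmono_props {E A e} _.
Arguments regepi_props {X Z f} _.
Arguments coeq_of_final {A X Z u v f} Hs Hf Huv Hcov.
Arguments quot {X rel} Hrefl Hsym Htrans Hcong.
Arguments qproj {X rel} Hrefl Hsym Htrans Hcong.
Arguments qproj_eq {X rel} Hrefl Hsym Htrans Hcong x y.

Lemma clause_reg (HV : frame_law V) : is_regular_category V.
Proof.
  split; [|split; [|split]].
  - exists (Term). intros X.
    unshelve eexists (@VHom V X Term (fun _ => tt) _ _).
    + intros; reflexivity.
    + intros; apply le_top.
    + intros h' x. simpl. destruct (h' x). reflexivity.
  - intros X Y Z f g. exists (Pb f g), (pb1 f g), (pb2 f g). apply pb_is_pullback.
  - intros X Y f P p1 p2 Hkp. exists (Im f), (cor f).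
    destruct (pb_props Hkp) as [Hpt _].
    apply coeq_of_final.
    + intros [y [x e]]. exists x. apply sig_eq. exact e.
    + intros c c'. simpl. unfold dim. apply qsup_least.
      intros a [x [x' [e1 [e2 ->]]]]. apply qsup_ub. exists x, x'.
      split; [apply sig_eq; exact e1|]. split; [apply sig_eq; exact e2|]. reflexivity.
    + intros a. apply sig_eq. apply (proj1 Hkp).
    + intros x x' e. apply (f_equal (@proj1_sig _ _)) in e. simpl in e.
      destruct (Hpt x x' e) as [p [H1 H2]]. exists p. auto.
  - intros X Y Z f g P p1 p2 Hre Hpb.
    destruct (regepi_props Hre) as [Hs Hf].
    destruct (pb_props Hpb) as [Hpt [_ Hd]].
    exists (Pb p2 p2), (pb1 p2 p2), (pb2 p2 p2). apply coeq_of_final.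
    + intros y. destruct (Hs (g y)) as [x e]. destruct (Hpt x y e) as [p [_ H2]].
      exists p; exact H2.
    + intros y y'.
      set (S := fun a => exists x x', f x = g y /\ f x' = g y' /\ a = vdist x x').
      assert (H1 : qle (vdist y y') (qsup S)).
      { eapply qle_trans; [apply (hcontr g)|]. apply Hf. }
      assert (H2 : qle (vdist y y') (qmeet (vdist y y') (qsup S))).
      { apply qmeet_glb; [apply qle_refl | exact H1]. }
      rewrite HV in H2. eapply qle_trans; [exact H2|]. apply qsup_least.
      intros a [s [[x [x' [e1 [e2 ->]]]] ->]].
      destruct (Hpt x y e1) as [p [Hp1 Hp2]].
      destruct (Hpt x' y' e2) as [p' [Hp1' Hp2']].
      apply qle_trans with (vdist p p').
      * eapply qle_trans; [|apply Hd]. rewrite Hp1, Hp2, Hp1', Hp2'.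
        apply qmeet_glb; [apply qmeet_lb2 | apply qmeet_lb1].
      * apply qsup_ub. exists p, p'. auto.
    + intros a. exact (proj2_sig a).
    + intros x x' e. exists (exist _ (x, x') e). split; reflexivity.
Qed.

Lemma clause_eff :
  forall (X R T : vgrp V) (r1 r2 : vhom R X) (t1 t2 : vhom T X) (j : vhom T R),
     is_equiv_rel r1 r2 -> effective_rel r1 r2 ->
     is_equiv_rel t1 t2 ->
     regular_mono j -> meq (hcomp r1 j) t1 -> meq (hcomp r2 j) t2 ->
     effective_rel t1 t2.
Proof.
  intros X R T r1 r2 t1 t2 j _ [Y [f HRk]] HTe Hj Hj1 Hj2.
  destruct (pb_props HRk) as [_ [Rinj Rd]].
  destruct (regmono_props Hj) as [jinj jd].
  assert (Tinj : forall a b, t1 a = t1 b -> t2 a = t2 b -> a = b).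
  { intros a b e1 e2. apply jinj. apply Rinj.
    - pose proof (Hj1 a); pose proof (Hj1 b); simpl in *. congruence.
    - pose proof (Hj2 a); pose proof (Hj2 b); simpl in *. congruence. }
  assert (Td : forall a b, qle (qmeet (vdist (t1 a) (t1 b)) (vdist (t2 a) (t2 b))) (vdist a b)).
  { intros a b. eapply qle_trans; [|apply jd]. eapply qle_trans; [|apply Rd].
    pose proof (Hj1 a); pose proof (Hj1 b); pose proof (Hj2 a); pose proof (Hj2 b).
    simpl in *. rewrite H, H0, H1, H2. apply qle_refl. }
  destruct HTe as [_ [[rr [Hr1 Hr2]] [[s [Hs1 Hs2]] Htr]]].
  set (rel := fun x y => exists t, t1 t = x /\ t2 t = y).
  assert (Hrefl : forall x, rel x x).
  { intros x. exists (rr x). split; [apply Hr1 | apply Hr2]. }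
  assert (Hsym : forall x y, rel x y -> rel y x).
  { intros x y [t [<- <-]]. exists (s t). split; [apply Hs1 | apply Hs2]. }
  assert (Htrans : forall x y z, rel x y -> rel y z -> rel x z).
  { intros x y z [t [<- e]] [t' [e' <-]].
    destruct (Htr (Pb t2 t1) (pb1 t2 t1) (pb2 t2 t1) (pb_is_pullback t2 t1)) as [m [Hm1 Hm2]].
    assert (e0 : t2 t = t1 t') by congruence.
    exists (m (exist _ (t, t') e0)). split; [apply Hm1 | apply Hm2]. }
  assert (Hcong : forall x x' y y', rel x x' -> rel y y' -> rel (vadd x y) (vadd x' y')).
  { intros x x' y y' [t [<- <-]] [t' [<- <-]]. exists (vadd t t'). split; apply hadd. }
  exists (quot Hrefl Hsym Htrans Hcong), (qproj Hrefl Hsym Htrans Hcong).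
  split.
  - intros t. apply (proj2 (qproj_eq Hrefl Hsym Htrans Hcong (t1 t) (t2 t))). exists t. auto.
  - intros Q q1 q2 Hq.
    assert (Hrel : forall w, exists t, t1 t = q1 w /\ t2 t = q2 w).
    { intros w. apply (proj1 (qproj_eq Hrefl Hsym Htrans Hcong _ _)). apply Hq. }
    pose (sel w := proj1_sig (constructive_indefinite_description _ (Hrel w))).
    assert (Hsel : forall w, t1 (sel w) = q1 w /\ t2 (sel w) = q2 w).
    { intros w. unfold sel. destruct (constructive_indefinite_description _ (Hrel w)); auto. }
    assert (Ha : forall w w', sel (vadd w w') = vadd (sel w) (sel w')).
    { intros w w'. apply Tinj.
      - rewrite hadd, (proj1 (Hsel w)), (proj1 (Hsel w')), (proj1 (Hsel (vadd w w'))). apply hadd.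
      - rewrite hadd, (proj2 (Hsel w)), (proj2 (Hsel w')), (proj2 (Hsel (vadd w w'))). apply hadd. }
    assert (Hc : forall w w', qle (vdist w w') (vdist (sel w) (sel w'))).
    { intros w w'. eapply qle_trans; [|apply Td].
      rewrite (proj1 (Hsel w)), (proj1 (Hsel w')), (proj2 (Hsel w)), (proj2 (Hsel w')).
      apply qmeet_glb; apply hcontr. }
    exists (@VHom V Q T sel Ha Hc). split; [|split].
    + intros w. apply (Hsel w).
    + intros w. apply (Hsel w).
    + intros h' H1 H2 w. simpl. apply Tinj.
      * rewrite (proj1 (Hsel w)). symmetry. apply H1.
      * rewrite (proj2 (Hsel w)). symmetry. apply H2.
Qed.

End S.

Theorem proposition4p4 (V : quantale) (HV : frame_law V) :
  is_regular_category V /\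
  (forall (X R T : vgrp V) (r1 r2 : vhom R X) (t1 t2 : vhom T X) (j : vhom T R),
     is_equiv_rel r1 r2 -> effective_rel r1 r2 ->
     is_equiv_rel t1 t2 ->
     regular_mono j -> meq (hcomp r1 j) t1 -> meq (hcomp r2 j) t2 ->
     effective_rel t1 t2).
Proof.
  split.
  - exact (clause_reg V HV).
  - exact (clause_eff V).
Qed.
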